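(* The hypergraph $K_{15}^{(3)}-I$ admits a decomposition into $50$ tight $9$-cycles.
   Context: $K_v^{(3)}$ denotes the complete $3$-uniform hypergraph on $v$ vertices. For $3\mid v$, $K_v^{(3)}-I$ is obtained from $K_v^{(3)}$ by deleting the edges of a $1$-factor $I$ (a set of $v/3$ pairwise disjoint triples covering all vertices). A (3-uniform tight) $k$-cycle is given by a cyclic sequence $v_1,\dots,v_k$ of $k$ distinct vertices, its edges being the triples $\{v_i,v_{i+1},v_{i+2}\}$ ($i=1,\dots,k$, indices mod $k$). A decomposition is a collection of cycles whose edge sets partition the edge set. *)

(* Defs.v *)
From mathcomp Require Import all_boot.
Set Implicit Arguments. Unset Strict Implicit. Unset Printing Implicit Defensive.

Definition triples (T : finType) : {set {set T}} := [set e : {set T} | #|e| == 3].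

Definition one_factor (T : finType) (I : {set {set T}}) : bool :=
  (I \subset triples T) && partition I [set: T].

Definition K3_minus (T : finType) (I : {set {set T}}) : {set {set T}} :=
  triples T :\: I.

(* A tight k-cycle given by the cyclic vertex sequence c = v_1 ... v_k
   (distinct vertices); its edges {v_i, v_{i+1}, v_{i+2}}, indices mod k. *)
Definition is_tight_cycle (T : finType) (k : nat) (c : seq T) : bool :=
  (size c == k) && uniq c.

Definition cycle_edges (T : finType) (c : seq T) : seq {set T} :=
  match c with
  | [::] => [::]
  | x0 :: _ =>
    [seq [set nth x0 c i; nth x0 c ((i + 1) %% size c); nth x0 c ((i + 2) %% size c)]
     | i <- iota 0 (size c)]
  end.

(* A collection cs of tight k-cycles decomposes the hypergraph with edge set E:
   the edge lists of the cycles, concatenated, form exactly the edge set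
   (every edge used exactly once, no other triples). *)
Definition decomposition (T : finType) (k : nat) (E : {set {set T}})
    (cs : seq (seq T)) : bool :=
  all (is_tight_cycle k) cs && perm_eq (flatten (map (@cycle_edges T) cs)) (enum E).

(* Main.v *)
Require Import Defs.
From mathcomp Require Import all_boot.
From mathcomp Require Import zify.
Set Implicit Arguments. Unset Strict Implicit. Unset Printing Implicit Defensive.

Definition cs0n : seq (seq nat) := [::[::11;2;7;12;8;9;5;10;6];
 [::14;5;10;0;11;12;8;13;9];
 [::2;8;13;3;14;0;11;1;12];
 [::5;11;1;6;2;3;14;4;0];
 [::8;14;4;9;5;6;2;7;3];
 [::5;1;2;14;11;9;12;7;6];
 [::8;4;5;2;14;12;0;10;9];
 [::11;7;8;5;2;0;3;13;12];
 [::14;10;11;8;5;3;6;1;0];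
 [::2;13;14;11;8;6;9;4;3];
 [::13;5;6;0;8;9;14;1;10];
 [::1;8;9;3;11;12;2;4;13];
 [::4;11;12;6;14;0;5;7;1];
 [::7;14;0;9;2;3;8;10;4];
 [::10;2;3;12;5;6;11;13;7];
 [::4;1;14;3;6;7;11;0;9];
 [::7;4;2;6;9;10;14;3;12];
 [::10;7;5;9;12;13;2;6;0];
 [::13;10;8;12;0;1;5;9;3];
 [::1;13;11;0;3;4;8;12;6];
 [::13;14;5;4;10;12;9;3;6];
 [::1;2;8;7;13;0;12;6;9];
 [::4;5;11;10;1;3;0;9;12];
 [::7;8;14;13;4;6;3;12;0];
 [::10;11;2;1;7;9;6;0;3];
 [::1;8;11;2;13;0;6;7;14];
 [::4;11;14;5;1;3;9;10;2];
 [::7;14;2;8;4;6;12;13;5];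
 [::10;2;5;11;7;9;0;1;8];
 [::13;5;8;14;10;12;3;4;11];
 [::2;1;3;12;8;5;6;14;4];
 [::5;4;6;0;11;8;9;2;7];
 [::8;7;9;3;14;11;12;5;10];
 [::11;10;12;6;2;14;0;8;13];
 [::14;13;0;9;5;2;3;11;1];
 [::4;13;5;1;8;12;14;7;9];
 [::7;1;8;4;11;0;2;10;12];
 [::10;4;11;7;14;3;5;13;0];
 [::13;7;14;10;2;6;8;1;3];
 [::1;10;2;13;5;9;11;4;6];
 [::3;11;7;10;9;4;2;0;8];
 [::6;14;10;13;12;7;5;3;11];
 [::9;2;13;1;0;10;8;6;14];
 [::12;5;1;4;3;13;11;9;2];
 [::0;8;4;7;6;1;14;12;5];
 [::4;14;12;9;1;13;7;6;10];
 [::7;2;0;12;4;1;10;9;13];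
 [::10;5;3;0;7;4;13;12;1];
 [::13;8;6;3;10;7;1;0;4];
 [::1;11;9;6;13;10;4;3;7]].

Definition cs0 : seq (seq 'I_15) := map (map (@inord 14)) cs0n.
Definition cd (e : {set 'I_15}) : seq bool := [seq (@inord 14 i) \in e | i <- iota 0 15].
Definition codesn (c : seq nat) : seq (seq bool) :=
  match c with
  | [::] => [::]
  | x0 :: _ =>
    [seq [seq (j == nth x0 c i) || (j == nth x0 c ((i + 1) %% size c))
              || (j == nth x0 c ((i + 2) %% size c)) | j <- iota 0 15]
     | i <- iota 0 (size c)]
  end.
Definition bcode (k : nat) : seq bool := [seq (j %/ 3 == k) | j <- iota 0 15].
Definition blockset (k : nat) : {set 'I_15} := [set i : 'I_15 | i %/ 3 == k].
Definition allc := flatten (map codesn cs0n).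

Lemma Ccomp : [&& uniq allc, all (fun b => count id b == 3) allc,
   all (fun b => all (fun k => b != bcode k) (iota 0 5)) allc,
   size allc == 450, size cs0n == 50 &
   all (fun c => [&& size c == 9, uniq c & all (fun x => x < 15) c]) cs0n].
Proof. vm_compute. reflexivity. Qed.

Lemma cd_inj : injective cd.
Proof.
move=> e1 e2 /eq_in_map H; apply/setP => x.
rewrite -(inord_val x); apply: H; by rewrite mem_iota ltn_ord.
Qed.

Lemma nth_map_any (T1 T2 : Type) (f : T1 -> T2) x0 (s : seq T1) n :
  nth (f x0) (map f s) n = f (nth x0 s n).
Proof. by elim: s n => [|y s IH] [|n] //=. Qed.

Lemma nth_lt15 (x0 : nat) s k : all (fun x => x < 15) s -> x0 < 15 -> nth x0 s k < 15.
Proof. elim: s k => [|y s IH] [|k] //= /andP[hy hs] hx //; exact: IH. Qed.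

Lemma inord_eq (j m : nat) : j < 15 -> m < 15 -> (@inord 14 j == @inord 14 m) = (j == m).
Proof.
move=> hj hm; apply/eqP/eqP => [/(congr1 val)|->] //.
by rewrite /= !inordK.
Qed.

Lemma cd_edges c : all (fun x => x < 15) c ->
  map cd (cycle_edges (map (@inord 14) c)) = codesn c.
Proof.
case: c => [|x0 s] // ha.
have hsz : size (inord x0 :: map (@inord 14) s) = size (x0::s) by rewrite /= size_map.
rewrite [map _ (x0 :: s)]/=.
cbv beta iota delta [cycle_edges codesn].
rewrite hsz -map_comp; apply: eq_map => i; rewrite [LHS]/= /cd.
apply/eq_in_map => j; rewrite mem_iota => /andP[_ hj].
have e : inord x0 :: map (@inord 14) s = map (@inord 14) (x0 :: s) by [].
rewrite !inE e !nth_map_any.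
have h0 : x0 < 15 by case/andP: ha.
have hj' : j < 15 by rewrite add0n in hj.
by rewrite !inord_eq ?nth_lt15.
Qed.


Lemma card_cd (e : {set 'I_15}) : #|e| = count id (cd e).
Proof.
rewrite cardE /enum_mem size_filter -enumT /cd count_map -val_enum_ord count_map.
by apply: eq_count => x /=; rewrite inord_val.
Qed.

Lemma cd_block k : cd (blockset k) = bcode k.
Proof.
apply/eq_in_map => j; rewrite mem_iota => /andP[_ hj].
by rewrite inE inordK.
Qed.

Lemma L0codes : map cd (flatten (map (@cycle_edges _) cs0)) = allc.
Proof.
have /and5P[_ _ _ _ /andP[_ hc]] := Ccomp.
rewrite map_flatten /allc /cs0 -!map_comp; congr flatten; apply/eq_in_map => c hcin /=.
apply: cd_edges; by have /and3P[] := allP hc c hcin.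
Qed.

Lemma cycle_edges_map (f : 'I_15 -> 'I_15) c :
  cycle_edges (map f c) = map (fun e : {set 'I_15} => f @: e) (cycle_edges c).
Proof.
case: c => [|x0 s] //.
have e : map f (x0 :: s) = f x0 :: map f s by [].
rewrite e; cbv beta iota delta [cycle_edges]; rewrite -e size_map -map_comp.
apply: eq_map => i; rewrite [RHS]/= !nth_map_any.
by rewrite !imsetU !imset_set1.
Qed.

Theorem lemma13 :
  forall I : {set {set 'I_15}}, one_factor I ->
  exists cs : seq (seq 'I_15),
    size cs = 50 /\ decomposition 9 (K3_minus I) cs.
Proof.
move=> I /andP[sIT /and3P[/eqP covI trI nI0]].
have part : partition I [set: 'I_15] by apply/and3P; split => //; apply/eqP.
have c3 : forall A, A \in I -> #|A| = 3.
  by move=> A /(subsetP sIT); rewrite inE => /eqP.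
have cI : #|I| = 5.
  have := card_partition part; rewrite cardsT card_ord.
  rewrite (eq_bigr (fun _ => 3)); last by move=> A /c3.
  rewrite sum_nat_const; lia.
set s := enum I.
have ss : size s = 5 by rewrite /s -cardE.
have sin : forall k, k < 5 -> nth set0 s k \in I.
  by move=> k hk; rewrite -mem_enum mem_nth // ss.
have se : forall k, k < 5 -> size (enum (nth set0 s k)) = 3.
  by move=> k hk; rewrite -cardE c3 // sin.
pose f (i : 'I_15) : 'I_15 := nth ord0 (enum (nth set0 s (i %/ 3))) (i %% 3).
have fin : forall i : 'I_15, f i \in nth set0 s (i %/ 3).
  move=> i; have hk : i %/ 3 < 5 by have := ltn_ord i; lia.
  rewrite -mem_enum /f mem_nth // se //; lia.
have finj : injective f.
  move=> i1 i2 hf.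
  have h1 : i1 %/ 3 < 5 by have := ltn_ord i1; lia.
  have h2 : i2 %/ 3 < 5 by have := ltn_ord i2; lia.
  have eA : nth set0 s (i1 %/ 3) = nth set0 s (i2 %/ 3).
    apply/eqP; apply/negPn/negP => hne.
    have := trivIsetP trI _ _ (sin _ h1) (sin _ h2) hne => dis.
    by have := disjointFr dis (fin i1); rewrite hf fin.
  have ed : i1 %/ 3 = i2 %/ 3.
    have h1' : i1 %/ 3 < size s by rewrite ss.
    have h2' : i2 %/ 3 < size s by rewrite ss.
    by apply/eqP; rewrite -(nth_uniq set0 h1' h2' (enum_uniq _)) eA.
  move: hf; rewrite /f ed => /eqP.
  have h3 : forall i : 'I_15, i %% 3 < size (enum (nth set0 s (i2 %/ 3))) by move=> i; rewrite se //; lia.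
  rewrite (nth_uniq ord0 (h3 i1) (h3 i2) (enum_uniq _)) => /eqP em.
  apply: val_inj => /=; rewrite (divn_eq i1 3) (divn_eq i2 3) ed em //.
have fblock : forall k, k < 5 -> f @: blockset k = nth set0 s k.
  move=> k hk; apply/eqP; rewrite eqEsubset; apply/andP; split.
    apply/subsetP => y /imsetP[x]; rewrite inE => /eqP hx ->.
    by rewrite -hx fin.
  apply/subsetP => a ha.
  set r := index a (enum (nth set0 s k)).
  have hr : r < 3 by rewrite -(se k hk) index_mem mem_enum.
  have hi : 3 * k + r < 15 by lia.
  apply/imsetP; exists (Ordinal hi); first by rewrite inE /=; apply/eqP; lia.
  rewrite /f /=.
  have -> : (3 * k + r) %/ 3 = k by lia.
  have -> : (3 * k + r) %% 3 = r by lia.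
  by rewrite nth_index // mem_enum.
have Iblock : forall A, A \in I -> exists2 k, k < 5 & A = f @: blockset k.
  move=> A hA; have hk : index A s < 5 by move: (index_mem A s); rewrite ss mem_enum hA.
  by exists (index A s); rewrite // fblock // nth_index // mem_enum.
clearbody f s.
have /and5P[uc c3c nbc szc /andP[sz50 cyc]] := Ccomp.
have facts : [/\ uniq allc, size allc = 450 & size cs0n = 50].
  by split; [exact: uc | exact/eqP | exact/eqP].
move/allP: c3c => c3c; move/allP: nbc => nbc; move/allP: cyc => cyc.
clear uc szc sz50.
exists (map (map f) cs0); split.
  rewrite !size_map; by case: facts => _ _ ->.
apply/andP; split.
  rewrite /cs0 -map_comp all_map; apply/allP => c hc.
  have /and3P[hs hu ha] := cyc c hc.
  rewrite /= /is_tight_cycle !size_map hs (map_inj_uniq finj).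
  have iinj : {in c &, injective (@inord 14)}.
    move=> x y /(allP ha) hx /(allP ha) hy /eqP; rewrite inord_eq // => /eqP; exact.
  by rewrite (map_inj_in_uniq iinj).
set L0 := flatten (map (@cycle_edges _) cs0).
have -> : flatten (map (@cycle_edges _) (map (map f) cs0)) = map (fun e : {set 'I_15} => f @: e) L0.
  rewrite /L0 map_flatten -!map_comp; congr flatten; apply: eq_map => c /=.
  exact: cycle_edges_map.
have FI : injective (fun e : {set 'I_15} => f @: e) := imset_inj finj.
have uL : uniq (map (fun e : {set 'I_15} => f @: e) L0).
  rewrite (map_inj_uniq FI); apply: (map_uniq (f := cd)); rewrite L0codes.
  by case: facts.
have sub : {subset map (fun e : {set 'I_15} => f @: e) L0 <= enum (K3_minus I)}.
  move=> x /mapP[e he ->]; rewrite mem_enum /K3_minus inE; apply/andP; split.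
    apply/negP => /Iblock[k hk eq].
    have ee := FI _ _ eq.
    have hin : cd e \in allc by rewrite -L0codes map_f.
    move: (nbc _ hin) => /allP/(_ k); rewrite mem_iota /= ee cd_block eqxx.
    move=> H; have := H hk; exact.
  rewrite inE card_imset //; rewrite card_cd.
  have hin : cd e \in allc by rewrite -L0codes map_f.
  exact: (c3c _ hin).
have sz : size (map (fun e : {set 'I_15} => f @: e) L0) = 450.
  rewrite size_map -(size_map cd) L0codes; by case: facts.
have cK : #|K3_minus I| = 450.
  rewrite /K3_minus cardsD (setIidPr sIT) cI /triples card_draws card_ord.
  exact: erefl.
have [_ eqm] := uniq_min_size uL sub (eq_leq (etrans (esym (cardE _)) (etrans cK (esym sz)))).
exact: uniq_perm uL (enum_uniq _) eqm.
Qed.
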